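(* Let $w,u$ be integers with $w/2 \le u < w$, fix a sign, and let $q = 2^w - 2^u \pm 1$. Let $\lambda$ be a positive integer that is an integer multiple of $q$. Define $c = \lfloor \lambda / 2^w \rfloor$ and, for integers $x$, $$v(x) = \left\lfloor -\frac{x(2^u \mp 1)}{2^w} \right\rfloor, \qquad f(x) = x + v(x),$$ where $\mp$ is the sign opposite to the one chosen in $q$, so that $q = 2^w - (2^u \mp 1)$. Define the sequence $b_0 = c$ and $b_{i+1} = b_i + (c - f(b_i))$ for $i \ge 0$. Then there exists a finite $i \ge 0$ with $f(b_i) = c$. In other words, the loop ''while $f(b_i)\neq c$: $b_{i+1}\gets b_i + (c-f(b_i))$'' started from $b_0=c$ terminates after finitely many iterations.
   Context: This is the iterative part of a division algorithm (''Algorithm 1''). Its input is $\lambda$ and $q = 2^w - 2^u \pm 1$. It sets $c \gets \lfloor \lambda/2^w \rfloor$ and $b_0 \gets c$. While $f(b_i) \neq c$, it sets $b_{i+1} \gets b_i + (c - f(b_i))$. The last $b_i$ computed is called $b^*$. It then outputs $b = b^* + (\mathrm{LSB}(\lambda) \ \mathrm{XOR}\ \mathrm{LSB}(b^* ))$, where $\mathrm{LSB}$ denotes the least significant bit. *)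

(* Defs.v *)
From Stdlib Require Import ZArith.
Open Scope Z_scope.

(* The sign choice: s = 1 gives q = 2^w - 2^u + 1, s = -1 gives q = 2^w - 2^u - 1.
   In both cases q = 2^w - (2^u - s). *)
Definition qmod (w u s : Z) : Z := 2 ^ w - 2 ^ u + s.

Definition vfun (w u s x : Z) : Z := Z.div (- (x * (2 ^ u - s))) (2 ^ w).

Definition ffun (w u s x : Z) : Z := x + vfun w u s x.

Definition cval (w lam : Z) : Z := Z.div lam (2 ^ w).

Fixpoint bseq (w u s lam : Z) (i : nat) : Z :=
  match i with
  | O => cval w lam
  | S i' => let b := bseq w u s lam i' in b + (cval w lam - ffun w u s b)
  end.

(* Main.v *)
Require Import Defs.
From Stdlib Require Import ZArith Lia.
Open Scope Z_scope.

Lemma ffun_eq w u s x : 0 < 2 ^ w ->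
  ffun w u s x = (x * qmod w u s) / 2 ^ w.
Proof.
  intros HW. unfold ffun, vfun, qmod.
  rewrite <- Z.div_add_l by lia. f_equal. ring.
Qed.

Theorem theorem1 (w u s lam : Z) :
  w <= 2 * u -> u < w ->
  (s = 1 \/ s = -1) ->
  0 < lam -> (qmod w u s | lam) ->
  exists i : nat, ffun w u s (bseq w u s lam i) = cval w lam.
Proof.
  intros H1 H2 Hs Hl [k Hk].
  set (W := 2 ^ w) in *.
  assert (Hu : 2 <= 2 ^ u).
  { replace 2 with (2 ^ 1) at 1 by reflexivity. apply Z.pow_le_mono_r; lia. }
  assert (HWu : 2 * 2 ^ u <= W).
  { unfold W. replace (2 * 2 ^ u) with (2 ^ (u + 1)) by (rewrite Z.pow_add_r by lia; ring).
    apply Z.pow_le_mono_r; lia. }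
  set (q := qmod w u s) in *.
  assert (Hq : 0 < q <= W) by (unfold q, qmod; fold W; lia).
  assert (HW : 0 < W) by lia.
  assert (Hk0 : 0 < k) by nia.
  set (c := cval w lam).
  assert (Hc : c = (k * q) / W) by (unfold c, cval; fold W; now rewrite Hk).
  assert (Hf : forall x, ffun w u s x = x * q / W) by (intro; apply ffun_eq; exact HW).
  assert (Hck : c <= k).
  { rewrite Hc. apply Z.div_le_upper_bound; nia. }
  assert (Hc0 : 0 <= c) by (rewrite Hc; apply Z.div_pos; nia).
  assert (Key : forall b, b <= k -> ffun w u s b <= c /\ b + (c - ffun w u s b) <= k).
  { intros b Hb. rewrite Hf. split.
    - rewrite Hc. apply Z.div_le_mono; nia.
    - assert (k * q / W <= b * q / W + (k - b)).
      { rewrite <- Z.div_add by lia. apply Z.div_le_mono; nia. }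
      lia. }
  assert (Inv : forall i : nat, bseq w u s lam i <= k /\
     ((exists j : nat, ffun w u s (bseq w u s lam j) = c) \/ c + Z.of_nat i <= bseq w u s lam i)).
  { induction i as [|i [IHb IH]].
    - simpl. fold c. split; [lia|right; lia].
    - simpl. fold c. destruct (Key _ IHb) as [K1 K2]. split; [lia|].
      destruct IH as [IH|IH]; [left; exact IH|].
      destruct (Z.eq_dec (ffun w u s (bseq w u s lam i)) c) as [E|E].
      + left; exists i; exact E.
      + right; lia. }
  destruct (Inv (Z.to_nat (k - c + 1))) as [Hb [[j Hj]|Hc']].
  - exists j; exact Hj.
  - rewrite Z2Nat.id in Hc' by lia. lia.
Qed.
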